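(* Let $q\in\mathscr{P}_2(\mathbb{R}^d)$ not give mass to small sets, and let $\psi:\mathbb{R}^d\to(-\infty,+\infty]$ be a proper, lower semicontinuous convex function. Define $\varphi^\psi(x)\coloneqq\inf_{p\in\mathscr{P}_2^x(\mathbb{R}^d)}\big(\int\psi\,dp-\mathrm{MCov}(p,q)\big)$ for $x\in\mathbb{R}^d$. Then: (i) the function $x\mapsto\varphi^\psi(x)$ is convex on $\operatorname{dom}\psi$; (ii) if $\varphi^\psi(x)>-\infty$ for some $x\in\operatorname{int}(\operatorname{dom}\psi)$, then $\varphi^\psi>-\infty$ on $\operatorname{int}(\operatorname{dom}\psi)$.
   Context: $\mathscr{P}_2(\mathbb{R}^d)$: Borel probability measures with finite second moment; $\mathscr{P}_2^x(\mathbb{R}^d)$: those with barycenter $\int y\,p(dy)=x$. $q$ does not give mass to small sets: $q(A)=0$ for measurable $A$ of Hausdorff dimension $\le d-1$. $\mathrm{MCov}(p,q)\coloneqq\sup_{\tilde\pi\in\mathsf{Cpl}(p,q)}\int\langle y,z\rangle\,d\tilde\pi$ over couplings. $\operatorname{dom}\psi=\{\psi<+\infty\}$; proper means $\operatorname{dom}\psi\neq\varnothing$. *)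

(* Defs.v *)
From mathcomp Require Import all_boot all_order all_algebra.
From mathcomp Require Import all_classical all_reals all_analysis.
Set Implicit Arguments. Unset Strict Implicit. Unset Printing Implicit Defensive.
Import Order.TTheory GRing.Theory Num.Theory numFieldNormedType.Exports.
Local Open Scope classical_set_scope.
Local Open Scope ring_scope.

Section Defs.
Variables (R : realType) (d : nat).

(** R^d is modelled by row vectors 'rV[R]_d (with the library topology). *)
Definition dotv (y z : 'rV[R]_d) : R := \sum_(i < d) y ord0 i * z ord0 i.
Definition edist (x y : 'rV[R]_d) : R := Num.sqrt (dotv (x - y) (x - y)).

Definition Rd := g_sigma_algebraType (@open ('rV[R]_d : topologicalType)).

Local Open Scope ereal_scope.

Definition P2 (p : probability Rd R) : Prop :=
  \int[p]_y (dotv y y)%:E < +oo.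

Definition P2x (x : 'rV[R]_d) : set (probability Rd R) :=
  [set p | P2 p /\ forall i : 'I_d, \int[p]_y (y ord0 i)%:E = (x ord0 i)%:E].

Definition Cpl (p q : probability Rd R) : set (probability (Rd * Rd)%type R) :=
  [set pi | (forall A : set Rd, measurable A -> pi (A `*` setT) = p A) /\
            (forall B : set Rd, measurable B -> pi (setT `*` B) = q B)].

Definition MCov (p q : probability Rd R) : \bar R :=
  ereal_sup [set \int[pi]_yz (dotv yz.1 yz.2)%:E | pi in Cpl p q].

Definition ediam (A : set 'rV[R]_d) : \bar R :=
  ereal_sup [set (edist xy.1 xy.2)%:E | xy in A `*` A].

Definition hpow (s : R) (U : set 'rV[R]_d) : \bar R :=
  if asbool (U = set0) then 0 else ((fine (ediam U)) `^ s)%:E.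

Definition hausdorff_content (s delta : R) (A : set 'rV[R]_d) : \bar R :=
  ereal_inf [set \sum_(0 <= n <oo) hpow s (C n) | C in
    [set C : nat -> set 'rV[R]_d |
       A `<=` \bigcup_n C n /\ forall n, ediam (C n) <= delta%:E]].

Definition hausdorff_measure (s : R) (A : set 'rV[R]_d) : \bar R :=
  ereal_sup [set hausdorff_content s delta A | delta in [set delta : R | (0 < delta)%R]].

Definition hausdorff_dim (A : set 'rV[R]_d) : \bar R :=
  ereal_inf [set s%:E | s in [set s : R | (0 <= s)%R /\ hausdorff_measure s A = 0]].

Definition no_mass_small_sets (q : probability Rd R) : Prop :=
  forall A : set Rd, measurable A ->
    hausdorff_dim A <= ((d%:R - 1)%R)%:E -> q A = 0.

Definition econvex (f : 'rV[R]_d -> \bar R) : Prop :=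
  forall (x y : 'rV[R]_d) (t : R), (0 < t < 1)%R ->
    f (t *: x + (1 - t) *: y)%R <= t%:E * f x + (1 - t)%R%:E * f y.

Definition edom (f : 'rV[R]_d -> \bar R) : set 'rV[R]_d := [set x | f x < +oo].

Definition phi_psi (psi : 'rV[R]_d -> \bar R) (q : probability Rd R)
    (x : 'rV[R]_d) : \bar R :=
  ereal_inf [set \int[p]_y psi y - MCov p q | p in P2x x].

End Defs.

(* Main.v *)
From HB Require Import structures.
Require Import Defs.
From mathcomp Require Import all_boot all_order all_algebra.
From mathcomp Require Import all_classical all_reals all_analysis.
From mathcomp Require Import measurable_realfun ring lra.
Set Implicit Arguments. Unset Strict Implicit. Unset Printing Implicit Defensive.
Import Order.TTheory GRing.Theory Num.Theory numFieldNormedType.Exports.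
Local Open Scope classical_set_scope.
Local Open Scope ring_scope.
Local Open Scope ereal_scope.
Lemma ecomb (R : realType) (t s : R) (A B C D : \bar R) : (0 < t)%R -> (0 < s)%R ->
  0 <= A -> 0 <= B -> 0 <= C -> 0 <= D ->
  (t%:E * A + s%:E * B) - (t%:E * C + s%:E * D) = t%:E * (A - C) + s%:E * (B - D).
Proof.
move=> t0 s0 A0 B0 C0 D0.
have tA : 0 <= t%:E * A by rewrite mule_ge0 // lee_fin ltW.
have sB : 0 <= s%:E * B by rewrite mule_ge0 // lee_fin ltW.
have tC : 0 <= t%:E * C by rewrite mule_ge0 // lee_fin ltW.
have sD : 0 <= s%:E * D by rewrite mule_ge0 // lee_fin ltW.
have ne : forall x : \bar R, 0 <= x -> x != -oo.
  by move=> x x0; rewrite gt_eqF // (lt_le_trans _ x0) // ltNye.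
case: C C0 tC => [c||] // C0 tC; last first.
  have Ny : - (+oo) = -oo :> \bar R by [].
  rewrite gt0_muley ?lte_fin // addye ?ne // Ny addeNy addeNy gt0_muleNy ?lte_fin //.
case: D D0 sD => [e||] // D0 sD; last first.
  have Ny : - (+oo) = -oo :> \bar R by [].
  rewrite gt0_muley ?lte_fin // addey ?ne // Ny addeNy addeNy gt0_muleNy ?lte_fin // addeNy //.
have -> : - (t%:E * c%:E + s%:E * e%:E) = (t%:E * (- c)%:E) + (s%:E * (- e)%:E).
  by rewrite -!EFinM -EFinD -EFinN; congr EFin; ring.
rewrite addeACA.
rewrite (@muleDr _ t%:E A (- c%:E)) ?fin_num_adde_defl //.
by rewrite (@muleDr _ s%:E B (- e%:E)) ?fin_num_adde_defl.
Qed.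

Section Mix.
Context dd (X : measurableType dd) (R : realType).
Variables (t s : {nonneg R}) (p p' : probability X R).

Definition mix (h : (t%:num + s%:num = 1)%R) : set X -> \bar R :=
  measure_add (mscale t p) (mscale s p').

Variable hts : (t%:num + s%:num = 1)%R.

HB.instance Definition _ := Measure.on (mix hts).

Let mix_setT : mix hts setT = 1.
Proof.
rewrite /mix measure_addE.
change (t%:num%:E * p setT + s%:num%:E * p' setT = 1).
rewrite !probability_setT !mule1 -EFinD hts //.
Qed.

HB.instance Definition _ := Measure_isProbability.Build _ _ _ (mix hts) mix_setT.

Definition mixP : probability X R := mix hts.

Lemma mixPE A : mixP A = t%:num%:E * p A + s%:num%:E * p' A.
Proof. change (mix hts A = t%:num%:E * p A + s%:num%:E * p' A); by rewrite /mix measure_addE. Qed.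

Lemma integral_mixP (f : X -> \bar R) : measurable_fun setT f ->
  (0 < t%:num)%R -> (0 < s%:num)%R ->
  \int[mixP]_x f x = t%:num%:E * \int[p]_x f x + s%:num%:E * \int[p']_x f x.
Proof.
move=> mf t0 s0.
rewrite integralE [\int[p]_x _]integralE [\int[p']_x _]integralE.
rewrite /mixP /mix ge0_integral_measure_add //; last exact: measurable_funepos.
rewrite ge0_integral_measure_add //; last exact: measurable_funeneg.
rewrite !ge0_integral_mscale //; try exact: measurable_funepos; try exact: measurable_funeneg.
by apply: ecomb => //; apply: integral_ge0.
Qed.

End Mix.
Arguments mixP {dd X R t s} p p' hts.

Section ER.
Variable R : realType.
Implicit Types (x y z u c : \bar R) (S : set (\bar R)).

Lemma muleDr_pos (t : R) x y : (0 < t)%R -> t%:E * (x + y) = t%:E * x + t%:E * y.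
Proof.
move=> t0; have [xy|] := boolP (x +? y); first by rewrite muleDr.
case: x => [a||]; case: y => [b||] //= _;
  by rewrite ?addeNy ?addNye gt0_muleNy ?gt0_muley ?lte_fin // ?addeNy ?addNye.
Qed.

Lemma supD_le S u c : (forall b, S b -> u + b <= c) -> u + ereal_sup S <= c.
Proof.
move=> H; case: u H => [r||] H; last by rewrite addNye leNye.
- rewrite -leeBrDl //; apply/ereal_supP => b Sb.
  by rewrite leeBrDl //; apply: H.
- have [sNy|] := eqVneq (ereal_sup S) -oo; first by rewrite sNy addeNy leNye.
  rewrite -ltNye => /ereal_sup_gt [b Sb bNy].
  have := H b Sb; rewrite addye ?gt_eqF //; move=> /(le_trans _)->//; exact: leey.
Qed.

Lemma infD_ge S u c : u < +oo -> (exists2 b, S b & b < +oo) ->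
  (forall b, S b -> b < +oo -> c <= u + b) -> c <= u + ereal_inf S.
Proof.
move=> uy [b0 Sb0 b0y] H; case: u uy H => [r||] // _ H.
  rewrite -leeBlDl //; apply/ereal_infP => b Sb.
  have [->|bny] := eqVneq b +oo; first exact: leey.
  by rewrite leeBlDl //; apply: H => //; rewrite ltey.
have := H b0 Sb0 b0y; rewrite addNye => /le_trans; apply; exact: leNye.
Qed.

Lemma ecomb2 x y m n : x - m < +oo -> y - n < +oo ->
  (x + y) - (m + n) <= (x - m) + (y - n).
Proof.
move=> xm yn; have [mn|] := boolP (m +? n).
  by rewrite oppeD // addeACA.
case: m xm => [a||]; case: n yn => [b||] //= yn xm _.
- case: y yn => [y||] //= _; by rewrite !addeNy leNye.
- case: x xm => [x||] //= _; by rewrite addNye !addeNy ?addNye leNye.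
Qed.

End ER.
Section S.
Variables (R : realType) (d : nat).
Local Notation T := (Rd R d).

Lemma cont_meas (f : 'rV[R]_d -> R) : continuous f -> measurable_fun [set: T] (f : T -> R).
Proof.
move=> /continuousP cf; apply: (measurability _ (measurable_realfun.RGenOpens.measurableE R)).
move=> _ [_ [a [b ->] <-]].
apply: measurableI => //.
apply: sub_sigma_algebra.
apply: cf. exact: interval_open.
Qed.

Lemma lsc_meas (f : 'rV[R]_d -> \bar R) : lower_semicontinuous f -> measurable_fun [set: T] (f : T -> \bar R).
Proof.
move=> scif; apply: (measurability _ (measurable_realfun.ErealGenOInfty.measurableE R)).
move=> /= _ [_ [a ->]] <-; apply: measurableI => //.
apply: sub_sigma_algebra.
by rewrite preimage_itvoy; move/lower_semicontinuousP : scif; exact.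
Qed.

Lemma coord_meas i : measurable_fun [set: T] (fun y : T => (y : 'rV[R]_d) ord0 i).
Proof. apply: cont_meas; exact: coord_continuous. Qed.

Lemma dotv_meas2 : measurable_fun [set: (T * T)%type] (fun yz : T * T => dotv yz.1 yz.2).
Proof.
rewrite /dotv.
apply: measurable_sum => i.
apply: measurable_funM.
  exact: (measurableT_comp (coord_meas i) measurable_fst).
exact: (measurableT_comp (coord_meas i) measurable_snd).
Qed.

Lemma dotv_meas1 : measurable_fun [set: T] (fun y : T => dotv y y).
Proof.
rewrite /dotv.
apply: measurable_sum => i.
by apply: measurable_funM; exact: coord_meas.
Qed.

End S.

Section Main.
Variables (R : realType) (d : nat).
Local Notation T := (Rd R d).
Implicit Types (p q : probability T R).

Lemma fin_lt {a : \bar R} : 0 <= a -> a < +oo -> a \is a fin_num.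
Proof. by move=> a0 ay; rewrite ge0_fin_numE. Qed.

Section mixs.
Variables (t s : {nonneg R}) (hts : (t%:num + s%:num = 1)%R).
Hypotheses (t0 : (0 < t%:num)%R) (s0 : (0 < s%:num)%R).

Lemma mix_P2x p p' x y : P2x x p -> P2x y p' ->
  P2x (t%:num *: x + s%:num *: y)%R (mixP p p' hts).
Proof.
move=> [P2p bp] [P2p' bp']; split.
  rewrite /P2 integral_mixP //; last by apply/measurable_EFinP; exact: dotv_meas1.
  have h1 : 0 <= \int[p]_y0 (dotv y0 y0)%:E.
    by apply: integral_ge0 => y0 _; rewrite lee_fin /dotv sumr_ge0 // => i _; rewrite -expr2 sqr_ge0.
  have h2 : 0 <= \int[p']_y0 (dotv y0 y0)%:E.
    by apply: integral_ge0 => y0 _; rewrite lee_fin /dotv sumr_ge0 // => i _; rewrite -expr2 sqr_ge0.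
  rewrite -(fineK (fin_lt h1 P2p)) -(fineK (fin_lt h2 P2p')) -!EFinM -EFinD; exact: ltry.
move=> i; rewrite integral_mixP //; last by apply/measurable_EFinP; exact: coord_meas.
by rewrite bp bp' -!EFinM -EFinD !mxE.
Qed.

Lemma mix_Cpl p p' q pi pi' : Cpl p q pi -> Cpl p' q pi' ->
  Cpl (mixP p p' hts) q (mixP pi pi' hts).
Proof.
move=> [h1 h2] [h1' h2']; split.
  by move=> A mA; rewrite !mixPE h1 // h1'.
move=> B mB; rewrite !mixPE h2 // h2' // -ge0_muleDl ?lee_fin // -EFinD hts mul1e //.
Qed.

Lemma MCov_mix p p' q :
  t%:num%:E * MCov p q + s%:num%:E * MCov p' q <= MCov (mixP p p' hts) q.
Proof.
rewrite /MCov -ereal_sup_pZl // -ereal_sup_pZl //.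
rewrite addeC; apply: supD_le => _ [_ [pi' Cpi' <-] <-].
rewrite addeC; apply: supD_le => _ [_ [pi Cpi <-] <-].
apply: ereal_sup_ubound; exists (mixP pi' pi hts); first exact: mix_Cpl.
rewrite integral_mixP //.
by apply/measurable_EFinP; exact: dotv_meas2.
Qed.

Lemma mul_lty (a : \bar R) (r : R) : (0 < r)%R -> (r%:E * a < +oo) = (a < +oo).
Proof.
move=> r0; case: a => [a||] //=.
- by rewrite -EFinM !ltry.
- by rewrite gt0_muley ?lte_fin // ltxx.
- by rewrite gt0_muleNy ?lte_fin // ltNye.
Qed.

Variables (psi : 'rV[R]_d -> \bar R) (q : probability T R).
Hypothesis mpsi : measurable_fun [set: T] (psi : T -> \bar R).

Definition Aof p := \int[p]_y psi y - MCov p q.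

Lemma Kmix p p' x y : P2x x p -> P2x y p' -> Aof p < +oo -> Aof p' < +oo ->
  phi_psi psi q (t%:num *: x + s%:num *: y)%R <= t%:num%:E * Aof p + s%:num%:E * Aof p'.
Proof.
move=> Pp Pp' Ap Ap'.
apply: le_trans (ereal_inf_lbound _) _.
  by exists (mixP p p' hts); first exact: mix_P2x.
rewrite integral_mixP //.
apply: le_trans (_ : (t%:num%:E * \int[p]_y psi y + s%:num%:E * \int[p']_y psi y)
   - (t%:num%:E * MCov p q + s%:num%:E * MCov p' q) <= _).
  by apply: leeD2l; rewrite leeN2; exact: MCov_mix.
rewrite /Aof (muleDr_pos (\int[p]_y psi y) (- MCov p q) t0).
rewrite (muleDr_pos (\int[p']_y psi y) (- MCov p' q) s0) !muleN; apply: ecomb2.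
  by rewrite /Aof -(mul_lty _ t0) (muleDr_pos (\int[p]_y psi y) (- MCov p q) t0) muleN in Ap.
by rewrite /Aof -(mul_lty _ s0) (muleDr_pos (\int[p']_y psi y) (- MCov p' q) s0) muleN in Ap'.
Qed.

End mixs.

Definition pairx (x : T) : T -> (T * T)%type := fun b => (x, b).

Lemma pairx_meas x : measurable_fun [set: T] (pairx x).
Proof. by apply: measurable_fun_pair => //; exact: measurable_cst. Qed.

HB.instance Definition _ x := isMeasurableFun.Build _ _ _ _ (pairx x) (pairx_meas x).

Definition cplx (x : T) (q : probability T R) : probability (T * T)%type R :=
  distribution q (pairx x).

Definition dx (x : T) : probability T R := \d_x.

Lemma cplx_Cpl x q : Cpl (dx x) q (cplx x q).
Proof.
split.
  move=> A mA; have -> : (dx x) A = ((x \in A)%:R)%:E by exact: diracE.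
  change (q (pairx x @^-1` (A `*` setT)) = ((x \in A)%:R)%:E).
  have [xA|xA] := boolP (x \in A).
    rewrite (_ : _ @^-1` _ = setT) ?probability_setT //.
    by apply/seteqP; split => // b _; rewrite /pairx /=; split => //; rewrite -inE.
  rewrite (_ : _ @^-1` _ = set0) ?measure0 //.
  by apply/seteqP; split => // b [/= /mem_set]; rewrite (negbTE xA).
move=> B mB; change (q (pairx x @^-1` (setT `*` B)) = q B).
by congr (q _); apply/seteqP; split => b //= [].
Qed.
Lemma dotv_ge0 (y : 'rV[R]_d) : (0 <= dotv y y)%R.
Proof. by rewrite /dotv sumr_ge0 // => i _; rewrite -expr2 sqr_ge0. Qed.

Lemma dot_neg_bound (x b : 'rV[R]_d) : (- dotv x b <= dotv x x + dotv b b)%R.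
Proof.
have h : (0 <= dotv x x + dotv b b + 2 * dotv x b)%R.
  have -> : (dotv x x + dotv b b + 2 * dotv x b =
      \sum_(i < d) (x ord0 i + b ord0 i) ^+ 2)%R.
    rewrite /dotv mulr_sumr -!big_split /=; apply: eq_bigr => i _; ring.
  by rewrite sumr_ge0 // => i _; rewrite sqr_ge0.
have := dotv_ge0 x; have := dotv_ge0 b; lra.
Qed.

Lemma MCov_dx x q : P2 q -> -oo < MCov (dx x) q.
Proof.
move=> P2q.
apply: (lt_le_trans _ (ereal_sup_ubound _)); last first.
  by exists (cplx x q); first exact: cplx_Cpl.
have mf : measurable_fun [set: (T * T)%type] (fun yz : T * T => (dotv yz.1 yz.2)%:E).
  by apply/measurable_EFinP; exact: dotv_meas2.
rewrite integralE.
have Ip : 0 <= \int[cplx x q]_yz (fun yz : T * T => (dotv yz.1 yz.2)%:E)^\+ yz.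
  by apply: integral_ge0 => yz _; exact: funepos_ge0.
have In0 : 0 <= \int[cplx x q]_yz (fun yz : T * T => (dotv yz.1 yz.2)%:E)^\- yz.
  by apply: integral_ge0 => yz _; exact: funeneg_ge0.
have In : \int[cplx x q]_yz (fun yz : T * T => (dotv yz.1 yz.2)%:E)^\- yz < +oo.
  rewrite /cplx ge0_integral_distribution //; last first.
    exact: measurable_funeneg.
  have mg : measurable_fun [set: T] (fun b : T => (dotv b b)%:E).
    by apply/measurable_EFinP; exact: dotv_meas1.
  apply: (@le_lt_trans _ _ (\int[q]_b ((dotv x x)%:E + (dotv b b)%:E))).
    apply: ge0_le_integral => //.
  - by move=> b _; exact: funeneg_ge0.
  - apply: measurableT_comp; last exact: pairx_meas.
    exact: measurable_funeneg.
  - by apply: emeasurable_funD => //; exact: measurable_cst.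
  - move=> b _; rewrite /= funenegE /pairx /= ge_max; apply/andP; split.
      by rewrite -EFinD lee_fin dot_neg_bound.
    by rewrite -EFinD lee_fin addr_ge0 // dotv_ge0.
  rewrite ge0_integralD //; try (by move=> b _; rewrite lee_fin dotv_ge0); try exact: measurable_cst.
  rewrite integral_cst //.
  apply: lte_add_pinfty; last exact: P2q.
  apply: lte_mul_pinfty => //; first by rewrite lee_fin dotv_ge0.
  apply: le_lt_trans (probability_le1 q _) _ => //; exact: ltry.
case: (\int[cplx x q]_yz _) Ip => [r||] //= _;
  case: (\int[cplx x q]_yz _) In0 In => [u||] //= *; exact: ltNyr.
Qed.

Lemma int_dx x (f : T -> \bar R) : measurable_fun [set: T] f ->
  \int[dx x]_y f y = f x.
Proof. by move=> mf; rewrite /dx integral_dirac // diracT mul1e. Qed.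

Lemma dx_P2x x : P2x x (dx x).
Proof.
split.
  rewrite /P2 int_dx; first exact: ltry.
  by apply/measurable_EFinP; exact: dotv_meas1.
move=> i; rewrite int_dx //.
by apply/measurable_EFinP; exact: coord_meas.
Qed.

Lemma Aof_dx psi q x : measurable_fun [set: T] (psi : T -> \bar R) -> P2 q ->
  psi x < +oo -> Aof psi q (dx x) < +oo.
Proof.
move=> mpsi P2q px; rewrite /Aof int_dx //.
apply: lte_add_pinfty => //.
by rewrite lteNl /=; exact: MCov_dx.
Qed.

Lemma part1 psi q : measurable_fun [set: T] (psi : T -> \bar R) -> P2 q ->
  forall (x y : 'rV[R]_d) (t : R), edom psi x -> edom psi y -> (0 < t < 1)%R ->
     phi_psi psi q (t *: x + (1 - t) *: y)%R
       <= t%:E * phi_psi psi q x + (1 - t)%R%:E * phi_psi psi q y.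
Proof.
move=> mpsi P2q x y t domx domy /andP[t0 t1].
have s0 : (0 < 1 - t)%R by rewrite subr_gt0.
pose tn : {nonneg R} := NngNum (ltW t0).
pose sn : {nonneg R} := NngNum (ltW s0).
have hts : (tn%:num + sn%:num = 1)%R by rewrite /= addrC subrK.
have K := Kmix hts t0 s0 mpsi.
have Fx := Aof_dx mpsi P2q domx.
have Fy := Aof_dx mpsi P2q domy.
rewrite /phi_psi.
rewrite -[X in _ <= _ + X](ereal_inf_pZl _ s0).
apply: infD_ge.
- rewrite mul_lty //; apply: le_lt_trans (ereal_inf_lbound _) Fx.
  by exists (dx x) => //; exact: dx_P2x.
- exists ((1 - t)%:E * Aof psi q (dx y)); last by rewrite mul_lty.
  by exists (Aof psi q (dx y)) => //; exists (dx y) => //; exact: dx_P2x.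
move=> _ [_ [p' Pp' <-] <-] ha.
have Ap' : Aof psi q p' < +oo by rewrite -(mul_lty _ s0).
rewrite [X in _ <= X]addeC -[X in _ <= _ + X](ereal_inf_pZl _ t0).
apply: infD_ge => //.
- exists (t%:E * Aof psi q (dx x)); last by rewrite mul_lty.
  by exists (Aof psi q (dx x)) => //; exists (dx x) => //; exact: dx_P2x.
move=> _ [_ [p Pp <-] <-] hb.
have Ap : Aof psi q p < +oo by rewrite -(mul_lty _ t0).
rewrite [X in _ <= X]addeC; exact: (K q p p' x y Pp Pp' Ap Ap').
Qed.

Lemma comb_id (x0 x : 'rV[R]_d) (del : R) : (0 < del)%R ->
  x0 = ((del / (1 + del)) *: x + (1 - del / (1 + del)) *: (x0 + del *: (x0 - x)))%R.
Proof.
move=> del0; apply/rowP => i; rewrite !mxE; field; lra.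
Qed.

Lemma part2 psi q : measurable_fun [set: T] (psi : T -> \bar R) -> P2 q ->
  (exists x0, (edom psi)° x0 /\ -oo < phi_psi psi q x0) ->
     forall x, (edom psi)° x -> -oo < phi_psi psi q x.
Proof.
move=> mpsi P2q [x0 [ix0 fx0]] x ix.
rewrite ltNye; apply/eqP => hx.
move: ix0 => /nbhs_ballP [e e0 be].
pose v := (x0 - x)%R.
have nv := normr_ge0 v.
pose del := (e / (2 * (`|v| + 1)))%R.
have del0 : (0 < del)%R by rewrite divr_gt0 // mulr_gt0 //; lra.
pose y := (x0 + del *: v)%R.
have domy : edom psi y.
  apply: be; rewrite -ball_normE /ball_ /=.
  have -> : (x0 - y = - (del *: v))%R by rewrite /y opprD addrA subrr add0r.
  rewrite normrN normrZ gtr0_norm //.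
  have h : (`|v| / (2 * (`|v| + 1)) < 1)%R.
    rewrite ltr_pdivrMr ?mul1r; lra.
  have -> : (del * `|v| = e * (`|v| / (2 * (`|v| + 1))))%R.
    by rewrite /del mulrAC mulrA.
  by rewrite gtr_pMr.
pose t := (del / (1 + del))%R.
have t01 : (0 < t < 1)%R.
  apply/andP; split; first by rewrite divr_gt0 //; lra.
  by rewrite ltr_pdivrMr ?mul1r; lra.
have Ex : x0 = (t *: x + (1 - t) *: y)%R.
  exact: comb_id.
have := part1 mpsi P2q (interior_subset ix) domy t01.
rewrite -Ex hx gt0_muleNy ?lte_fin ?addNye; last by case/andP: t01.
by rewrite leeNy_eq => /eqP h; move: fx0; rewrite h ltxx.
Qed.

End Main.

Theorem lemma3p1 (R : realType) (d : nat) (q : probability (Rd R d) R)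
    (psi : 'rV[R]_d -> \bar R) :
  P2 q -> no_mass_small_sets q ->
  (forall x, -oo < psi x) ->                (* psi : R^d -> (-oo, +oo] *)
  (exists x, psi x < +oo) ->                (* proper *)
  lower_semicontinuous psi ->
  econvex psi ->
  (* (i) convexity of phi^psi on dom psi *)
  (forall (x y : 'rV[R]_d) (t : R), edom psi x -> edom psi y -> (0 < t < 1)%R ->
     phi_psi psi q (t *: x + (1 - t) *: y)%R
       <= t%:E * phi_psi psi q x + (1 - t)%R%:E * phi_psi psi q y) /\
  (* (ii) finiteness from below propagates over int (dom psi) *)
  ((exists x0, (edom psi)° x0 /\ -oo < phi_psi psi q x0) ->
     forall x, (edom psi)° x -> -oo < phi_psi psi q x).
Proof.
move=> P2q _ _ _ lsc _.
have mpsi : measurable_fun [set: Rd R d] (psi : Rd R d -> \bar R) by exact: lsc_meas.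
split; [exact: part1 | exact: part2].
Qed.
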